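(* Let $A$ be a metric space, $\sigma:\mathbb{R}^N\times A\to\mathbb{R}^{N\times m}$, $b:\mathbb{R}^N\times A\to\mathbb{R}^N$ continuous, $a=\sigma\sigma^T$, such that for every $R>0$ there is $K_R$ with $\sup_{|x|\le R,\alpha}(|\sigma|+|b|)\le K_R$, $|\sigma(x,\alpha)-\sigma(y,\alpha)|+|b(x,\alpha)-b(y,\alpha)|\le K_R|x-y|$ for $|x|,|y|\le R$, and $\xi^Ta(x,\alpha)\xi\ge|\xi|^2/K_R$ for all $\xi$, $|x|\le R$, $\alpha$. Let $l:\mathbb{R}^N\times A\to\mathbb{R}$ be continuous, bounded, uniformly continuous in $x$ uniformly in $\alpha$, and let $F(x,p,X)$ be either $\inf_{\alpha}\{-\mathrm{tr}(a(x,\alpha)X)-b(x,\alpha)\cdot p-l(x,\alpha)\}$ or $\sup_\alpha\{-\mathrm{tr}(a(x,\alpha)X)-b(x,\alpha)\cdot p-l(x,\alpha)\}$. Assume that for every $M>0$ there is $R>0$ with $\sup_\alpha\{\mathrm{tr}\,a(x,\alpha)+b(x,\alpha)\cdot x\}\le-M$ for $|x|\ge R$. Let $c\in\mathbb{R}$ and $\chi$ be a viscosity solution of $F(x,D\chi,D^2\chi)=c$ in $\mathbb{R}^N$ with $\lim_{|x|\to\infty}\chi(x)/|x|^2=0$. Suppose moreover there exist $\rho>0$ and $R>0$ such that $$\sup_{\alpha\in A}\{\mathrm{tr}\,a(x,\alpha)+b(x,\alpha)\cdot x\}\le-\frac{2|c|+\|l\|_\infty}{\rho}|x|^{2+\rho}\quad\text{for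 }|x|\ge R.$$ Then for all $|x|\ge R$, $$\min_{|y|\le R}\chi(y)+\frac1{|x|^\rho}-\frac1{R^\rho}\le\chi(x)\le\max_{|y|\le R}\chi(y)-\frac1{|x|^\rho}+\frac1{R^\rho},$$ and in particular $\chi\in L^\infty(\mathbb{R}^N)$.
   Context: Solutions are viscosity solutions; $\|l\|_\infty=\sup_{\mathbb{R}^N\times A}|l|$. (Under these assumptions, such a pair $(c,\chi)$ exists, $c$ is unique, and $\chi$ is unique up to additive constants.) *)

(* Defs.v *)
From HB Require Import structures.
From mathcomp Require Import all_boot all_order all_algebra.
From mathcomp Require Import all_classical all_reals all_analysis.
Set Implicit Arguments. Unset Strict Implicit. Unset Printing Implicit Defensive.
Import Order.TTheory GRing.Theory Num.Theory.
Import numFieldNormedType.Exports.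
Local Open Scope classical_set_scope.
Local Open Scope ring_scope.

Section defs.
Variable R : realType.

Definition dotp (N : nat) (u v : 'rV[R]_N) : R := \sum_(i < N) u 0 i * v 0 i.
Definition enorm (N : nat) (u : 'rV[R]_N) : R := Num.sqrt (dotp u u).
Definition fnorm (N m : nat) (M : 'M[R]_(N, m)) : R :=
  Num.sqrt (\sum_(i < N) \sum_(j < m) M i j ^+ 2).
Definition quadf (N : nat) (X : 'M[R]_N) (v : 'rV[R]_N) : R := (v *m X *m v^T) 0 0.

Definition diffm (N m : nat) (A : Type) (sigma : 'rV[R]_N -> A -> 'M[R]_(N, m))
  (x : 'rV[R]_N) (al : A) : 'M[R]_N := sigma x al *m (sigma x al)^T.

Definition Lop (N m : nat) (A : Type) (sigma : 'rV[R]_N -> A -> 'M[R]_(N, m))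
  (b : 'rV[R]_N -> A -> 'rV[R]_N) (l : 'rV[R]_N -> A -> R)
  (x p : 'rV[R]_N) (X : 'M[R]_N) (al : A) : R :=
  - \tr (diffm sigma x al *m X) - dotp (b x al) p - l x al.

Definition Ham (is_inf : bool) (N m : nat) (A : Type)
  (sigma : 'rV[R]_N -> A -> 'M[R]_(N, m)) (b : 'rV[R]_N -> A -> 'rV[R]_N)
  (l : 'rV[R]_N -> A -> R) (x p : 'rV[R]_N) (X : 'M[R]_N) : R :=
  if is_inf then inf [set Lop sigma b l x p X al | al in [set: A]]
  else sup [set Lop sigma b l x p X al | al in [set: A]].

Definition linf (N : nat) (A : Type) (l : 'rV[R]_N -> A -> R) : R :=
  sup [set `|l z.1 z.2| | z in [set: ('rV[R]_N * A)%type]].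

Definition superjet2 (N : nat) (u : 'rV[R]_N -> R) (x p : 'rV[R]_N) (X : 'M[R]_N) : Prop :=
  (X^T = X) /\ forall e : R, 0 < e -> exists d : R, 0 < d /\ forall y : 'rV[R]_N, enorm (y - x) < d ->
    u y <= u x + dotp p (y - x) + 2^-1 * quadf X (y - x) + e * enorm (y - x) ^+ 2.

Definition subjet2 (N : nat) (u : 'rV[R]_N -> R) (x p : 'rV[R]_N) (X : 'M[R]_N) : Prop :=
  (X^T = X) /\ forall e : R, 0 < e -> exists d : R, 0 < d /\ forall y : 'rV[R]_N, enorm (y - x) < d ->
    u y >= u x + dotp p (y - x) + 2^-1 * quadf X (y - x) - e * enorm (y - x) ^+ 2.

Definition visc_solution (N : nat) (F : 'rV[R]_N -> 'rV[R]_N -> 'M[R]_N -> R)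
  (c : R) (u : 'rV[R]_N -> R) : Prop :=
  continuous u /\
  (forall x p X, superjet2 u x p X -> F x p X <= c) /\
  (forall x p X, subjet2 u x p X -> F x p X >= c).
End defs.

(* Main.v *)
Require Import Defs.
From HB Require Import structures.
From mathcomp Require Import all_boot all_order all_algebra.
From mathcomp Require Import all_classical all_reals all_analysis.
From mathcomp Require Import ring lra.
Import Order.TTheory GRing.Theory Num.Theory.
Import numFieldNormedType.Exports.
Local Open Scope classical_set_scope.
Local Open Scope ring_scope.
Set Implicit Arguments. Unset Strict Implicit.

Section basics.
Variable R : realType.
Variable n : nat.
Implicit Types u v w : 'rV[R]_n.

Lemma dotpC u v : dotp u v = dotp v u.
Proof. by apply: eq_bigr => i _; rewrite mulrC. Qed.
Lemma dotpDl u v w : dotp (u + v) w = dotp u w + dotp v w.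
Proof. by rewrite /dotp -big_split; apply: eq_bigr => i _; rewrite mxE mulrDl. Qed.
Lemma dotpDr u v w : dotp w (u + v) = dotp w u + dotp w v.
Proof. by rewrite dotpC dotpDl !(dotpC w). Qed.
Lemma dotpZl a u v : dotp (a *: u) v = a * dotp u v.
Proof. by rewrite /dotp mulr_sumr; apply: eq_bigr => i _; rewrite mxE mulrA. Qed.
Lemma dotpZr a u v : dotp u (a *: v) = a * dotp u v.
Proof. by rewrite dotpC dotpZl dotpC. Qed.
Lemma dotpNl u v : dotp (- u) v = - dotp u v.
Proof. by rewrite -scaleN1r dotpZl mulN1r. Qed.
Lemma dotpNr u v : dotp u (- v) = - dotp u v.
Proof. by rewrite dotpC dotpNl dotpC. Qed.
Lemma dotpBl u v w : dotp (u - v) w = dotp u w - dotp v w.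
Proof. by rewrite dotpDl dotpNl. Qed.
Lemma dotpBr u v w : dotp w (u - v) = dotp w u - dotp w v.
Proof. by rewrite dotpDr dotpNr. Qed.
Lemma dotp_ge0 u : 0 <= dotp u u.
Proof. by apply: sumr_ge0 => i _; rewrite -expr2 sqr_ge0. Qed.
Lemma enorm_ge0 u : 0 <= enorm u.
Proof. exact: sqrtr_ge0. Qed.
Lemma enorm_sq u : enorm u ^+ 2 = dotp u u.
Proof. by rewrite sqr_sqrtr // dotp_ge0. Qed.

Lemma dotp_eq0 u : dotp u u = 0 -> forall i, u 0 i = 0.
Proof.
move=> /eqP; rewrite psumr_eq0 => [/allP H i|i _]; last by rewrite -expr2 sqr_ge0.
by have /implyP/(_ isT) := H i (mem_index_enum _); rewrite mulf_eq0 orbb => /eqP.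
Qed.

Lemma dotpCS u v : dotp u v ^+ 2 <= dotp u u * dotp v v.
Proof.
have [uu0|uu0] := eqVneq (dotp u u) 0.
  have -> : dotp u v = 0.
    by rewrite /dotp big1 // => i _; rewrite (@dotp_eq0 u uu0) mul0r.
  by rewrite uu0 expr0n /= mul0r.
have uup : 0 < dotp u u by rewrite lt_def uu0 dotp_ge0.
pose t := dotp u v / dotp u u.
have := dotp_ge0 (t *: u - v).
rewrite !(dotpBl, dotpBr, dotpZl, dotpZr) (dotpC v u) /t.
move=> H.
set a := dotp u u in H uup *; set b := dotp u v in H *; set c := dotp v v in H *.
have H2 : 0 <= a * (b / a * (b / a * a - b) - (b / a * b - c)) by apply: mulr_ge0 => //; exact: ltW.
have E : a * (b / a * (b / a * a - b) - (b / a * b - c)) = a * c - b ^+ 2.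
  by field; rewrite lt0r_neq0.
by rewrite -subr_ge0 -E.
Qed.

Lemma CSabs u v : `|dotp u v| <= enorm u * enorm v.
Proof.
rewrite /enorm -sqrtrM ?dotp_ge0 // -sqrtr_sqr ler_sqrt ?mulr_ge0 ?dotp_ge0 //.
exact: dotpCS.
Qed.

Lemma enormD u v : enorm (u + v) <= enorm u + enorm v.
Proof.
rewrite -ler_sqr ?nnegrE ?addr_ge0 ?enorm_ge0 //.
rewrite enorm_sq sqrrD !enorm_sq dotpDl !dotpDr (dotpC v u).
have := CSabs u v; have := ler_norm (dotp u v). lra.
Qed.

Lemma enormN u : enorm (- u) = enorm u.
Proof. by rewrite /enorm dotpNl dotpNr opprK. Qed.

Lemma enorm_coord u i : `|u 0 i| <= enorm u.
Proof.
rewrite -ler_sqr ?nnegrE ?enorm_ge0 // enorm_sq real_normK ?num_real //.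
rewrite /dotp (bigD1 i) //= -expr2 lerDl.
by apply: sumr_ge0 => j _; rewrite -expr2 sqr_ge0.
Qed.

End basics.
Lemma mulmx_tr00 (R : realType) n (u v : 'rV[R]_n) : (u *m v^T) 0 0 = dotp u v.
Proof. by rewrite mxE; apply: eq_bigr => i _; rewrite mxE. Qed.

Lemma sum_tr00 (R : realType) n (u v : 'rV[R]_n) : \sum_j u 0 j * v^T j 0 = dotp u v.
Proof. by rewrite -mulmx_tr00 mxE. Qed.

Section mats.
Variable R : realType.
Variables N m : nat.


Definition Xm (x0 : 'rV[R]_N) (g be : R) : 'M[R]_N :=
  g *: 1%:M - be *: (x0^T *m x0).

Lemma Xm_sym x0 g be : (Xm x0 g be)^T = Xm x0 g be.
Proof.
by rewrite /Xm linearB /= !linearZ /= tr_scalar_mx trmx_mul trmxK.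
Qed.

Lemma quadf_Xm x0 g be h : quadf (Xm x0 g be) h = g * dotp h h - be * dotp x0 h ^+ 2.
Proof.
rewrite /quadf /Xm mulmxBr mulmxBl -!scalemxAr -!scalemxAl mulmx1.
have -> : h *m (x0^T *m x0) *m h^T = (h *m x0^T) *m (h *m x0^T)^T.
  by rewrite trmx_mul trmxK !mulmxA.
rewrite !mxE !sum_tr00.
rewrite [dotp (h *m x0^T) _]/dotp big_ord1 (@mulmx_tr00 _ _ h x0).
by rewrite dotpC expr2.
Qed.

Lemma tr_Xm (a : 'M[R]_N) x0 g be :
  \tr (a *m Xm x0 g be) = g * \tr a - be * quadf a x0.
Proof.
rewrite /Xm mulmxBr -!scalemxAr mulmx1 linearB /= !mxtraceZ.
by rewrite mulmxA mxtrace_mulC /quadf mulmxA /mxtrace big_ord1.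
Qed.

Lemma tr_diffm (A : Type) (sigma : 'rV[R]_N -> A -> 'M[R]_(N, m)) x al :
  \tr (diffm sigma x al) = fnorm (sigma x al) ^+ 2.
Proof.
rewrite /fnorm sqr_sqrtr; last by apply: sumr_ge0 => i _; apply: sumr_ge0 => j _; rewrite sqr_ge0.
by rewrite /mxtrace /diffm; apply: eq_bigr => i _; rewrite mxE; apply: eq_bigr => j _; rewrite mxE expr2.
Qed.

Lemma quadf_diffm (A : Type) (sigma : 'rV[R]_N -> A -> 'M[R]_(N, m)) x al v :
  quadf (diffm sigma x al) v = dotp (v *m sigma x al) (v *m sigma x al).
Proof. by rewrite /quadf /diffm !mulmxA -mulmx_tr00 trmx_mul -mulmxA. Qed.

Lemma quadf_diffm_ge0 (A : Type) (sigma : 'rV[R]_N -> A -> 'M[R]_(N, m)) x al v :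
  0 <= quadf (diffm sigma x al) v.
Proof. by rewrite quadf_diffm dotp_ge0. Qed.

Lemma quadf_diffm_le (A : Type) (sigma : 'rV[R]_N -> A -> 'M[R]_(N, m)) x al v :
  quadf (diffm sigma x al) v <= dotp v v * fnorm (sigma x al) ^+ 2.
Proof.
rewrite quadf_diffm /fnorm sqr_sqrtr; last by apply: sumr_ge0 => i _; apply: sumr_ge0 => j _; rewrite sqr_ge0.
rewrite exchange_big mulr_sumr /dotp; apply: ler_sum => k _.
have := dotpCS v (row k (sigma x al)^T).
rewrite -expr2; congr (_ <= _).
  by congr (_ ^+ 2); rewrite mxE; apply: eq_bigr => i _; rewrite !mxE.
by congr (_ * _); apply: eq_bigr => i _; rewrite !mxE expr2.
Qed.

End mats.
Section taylor.
Variable R : realType.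
Variable N : nat.

Definition Eb (rho : R) (y : 'rV[R]_N) : R := expR (- (rho / 2) * ln (dotp y y)).

Lemma Eb_gt0 rho y : 0 < Eb rho y.
Proof. exact: expR_gt0. Qed.

Lemma taylor (rho eps e : R) (x0 : 'rV[R]_N) : 0 < rho -> 0 <= eps -> 0 < e ->
  0 < dotp x0 x0 ->
  let P := Eb rho x0 in let s0 := dotp x0 x0 in
  let g := P * rho / s0 + 2 * eps in
  let be := P * rho ^+ 2 / (2 * s0 ^+ 2) in
  exists d : R, 0 < d /\ forall y : 'rV[R]_N, enorm (y - x0) < d -> 0 < dotp y y ->
   - Eb rho y + eps * dotp y y <= - Eb rho x0 + eps * dotp x0 x0
     + dotp (g *: x0) (y - x0) + 2^-1 * quadf (Xm x0 g be) (y - x0)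
     + e * enorm (y - x0) ^+ 2.
Proof.
move=> rho0 eps0 e0 s00 P s0 g be.
have P0 : 0 < P by apply: Eb_gt0.
have s0n : s0 != 0 by rewrite lt0r_neq0.
pose r0 := enorm x0.
have r0sq : r0 ^+ 2 = s0 by rewrite /r0 enorm_sq.
have r00 : 0 < r0.
  rewrite lt_def enorm_ge0 andbT; apply/eqP => r0e; move: r0sq.
  rewrite r0e expr0n /= => H; by move: s00; rewrite -/s0 -H ltxx.
pose d := Order.min r0 (Order.min (s0 / (rho * r0)) (4 * e * s0 ^+ 2 / (rho ^+ 2 * P * r0))).
have d1 : d <= r0 by rewrite /d ge_min lexx.
have d2 : d <= s0 / (rho * r0) by rewrite /d !ge_min lexx orbT.
have d3 : d <= 4 * e * s0 ^+ 2 / (rho ^+ 2 * P * r0) by rewrite /d !ge_min lexx !orbT.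
exists d; split.
  rewrite /d !lt_min r00 !divr_gt0 ?mulr_gt0 ?exprn_gt0 //.
move=> y hy yy0.
have [h yE] : exists h, y = x0 + h by exists (y - x0); rewrite addrC subrK.
have hE : y - x0 = h by rewrite yE addrC addKr.
rewrite hE in hy *.
pose nh := enorm h.
pose hh := dotp h h.
pose xh := dotp x0 h.
have nh0 : 0 <= nh by apply: enorm_ge0.
have hhE : hh = nh ^+ 2 by rewrite /nh enorm_sq.
have xhb : `|xh| <= r0 * nh by apply: CSabs.
have xhb1 : xh <= r0 * nh by apply: le_trans (ler_norm _) xhb.
have xhb2 : - (r0 * nh) <= xh by rewrite lerNl; apply: le_trans xhb; rewrite -normrN ler_norm.
have yyE : dotp y y = s0 + 2 * xh + hh.
  by rewrite yE !(dotpDl, dotpDr) (dotpC h x0) -/s0 -/xh -/hh; ring.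
rewrite -/nh -/hh -/xh yyE.
pose dl := (2 * xh + hh) / s0.
have yys : s0 + 2 * xh + hh = s0 * (1 + dl).
  by rewrite /dl; field; rewrite ?s0n.
have dlm1 : -1 < dl.
  have : 0 < s0 * (1 + dl) by rewrite -yys -yyE.
  rewrite pmulr_rgt0 // => H; lra.
have lnle : ln (s0 + 2 * xh + hh) - ln s0 <= dl.
  have dl1 : 0 < 1 + dl by lra.
  rewrite yys lnM ?posrE // (addrC (ln s0)) addrK; exact: le_ln1Dx.
set lam := ln (s0 + 2 * xh + hh) - ln s0 in lnle.
pose Q := expR (- (rho / 4) * lam).
have EbyE : Eb rho y = P * Q ^+ 2.
  rewrite /P /Eb yyE /Q expr2 -!expRD.
  by congr expR; rewrite /lam -/s0; field.
have Q0 : 1 - (rho / 4) * dl <= Q.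
  apply: le_trans (expR_ge1Dx _).
  have : rho / 4 * lam <= rho / 4 * dl by rewrite ler_pM2l ?divr_gt0.
  lra.
have nhlt : nh < d by [].
have nhr0 : nh <= r0 by apply: ltW; apply: lt_le_trans d1.
have dlb : dl <= 3 * r0 * nh / s0.
  rewrite /dl ler_pM2r ?invr_gt0 // hhE.
  have : nh * nh <= r0 * nh by apply: ler_wpM2r.
  rewrite expr2; lra.
have rnh : rho * r0 * nh <= s0.
  have : nh <= s0 / (rho * r0) by apply: ltW; apply: lt_le_trans d2.
  by move=> H; rewrite ler_pdivlMr ?mulr_gt0 // in H; nra.
have Q0pos : 0 <= 1 - (rho / 4) * dl.
  have : rho * dl <= 3.
    apply: le_trans (_ : rho * (3 * r0 * nh / s0) <= 3).
      by rewrite ler_pM2l.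
    rewrite mulrA ler_pdivrMr // (_ : rho * (3 * r0 * nh) = 3 * (rho * r0 * nh)); last by ring.
    by rewrite ler_pM2l.
  lra.
have QQ : (1 - (rho / 4) * dl) ^+ 2 <= Q ^+ 2.
  rewrite !expr2; apply: ler_pM => //.
have Eyb : P * (1 - (rho / 4) * dl) ^+ 2 <= Eb rho y.
  by rewrite EbyE ler_pM2l.
have err : P * rho ^+ 2 / 16 * (4 * xh ^+ 2 / s0 ^+ 2 - dl ^+ 2) <= e * hh.
  have E1 : 4 * xh ^+ 2 / s0 ^+ 2 - dl ^+ 2 = - (4 * xh * hh + hh ^+ 2) / s0 ^+ 2.
    by rewrite /dl; field; rewrite ?s0n.
  rewrite E1.
  have hh0 : 0 <= hh by rewrite hhE sqr_ge0.
  have E2 : - (4 * xh * hh + hh ^+ 2) <= 4 * (r0 * nh) * hh.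
    have : - xh * hh <= (r0 * nh) * hh by apply: ler_wpM2r => //; lra.
    have : 0 <= hh ^+ 2 by apply: sqr_ge0.
    lra.
  have s02 : 0 < s0 ^+ 2 by apply: exprn_gt0.
  apply: le_trans (_ : P * rho ^+ 2 / 16 * (4 * (r0 * nh) * hh / s0 ^+ 2) <= _).
    rewrite ler_pM2l ?mulr_gt0 ?divr_gt0 ?exprn_gt0 //.
    by rewrite ler_pM2r ?invr_gt0.
  have nhb : nh <= 4 * e * s0 ^+ 2 / (rho ^+ 2 * P * r0) by apply: ltW; apply: lt_le_trans d3.
  have : P * rho ^+ 2 * r0 * nh <= 4 * e * s0 ^+ 2.
    move: nhb; rewrite ler_pdivlMr ?mulr_gt0 ?exprn_gt0 //.
    by rewrite (_ : nh * (rho ^+ 2 * P * r0) = P * rho ^+ 2 * r0 * nh) //; ring.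
  move=> H.
  rewrite (_ : P * rho ^+ 2 / 16 * (4 * (r0 * nh) * hh / s0 ^+ 2) =
      (P * rho ^+ 2 * r0 * nh) * hh / (4 * s0 ^+ 2)); last by field; rewrite ?s0n.
  rewrite ler_pdivrMr ?mulr_gt0 //.
  rewrite (_ : e * hh * (4 * s0 ^+ 2) = (4 * e * s0 ^+ 2) * hh); last by ring.
  exact: ler_wpM2r.
rewrite dotpZl quadf_Xm -/hh -/xh (_ : enorm h ^+ 2 = hh) ?enorm_sq //.
rewrite /g /be.
have key : - P * (1 - rho / 4 * dl) ^+ 2 = - P + P * rho * xh / s0 + P * rho * hh / (2 * s0)
   - P * rho ^+ 2 / 16 * dl ^+ 2.
  by rewrite /dl; field; rewrite ?s0n.
have key2 : P * rho ^+ 2 / (2 * s0 ^+ 2) * xh ^+ 2 = P * rho ^+ 2 / 16 * (4 * xh ^+ 2 / s0 ^+ 2) * 2.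
  by field; rewrite ?s0n.
have K1 : - Eb rho y <= - P * (1 - rho / 4 * dl) ^+ 2 by rewrite mulNr lerN2.
rewrite -/P.
have E3 : P * rho ^+ 2 / 16 * (4 * xh ^+ 2 / s0 ^+ 2 - dl ^+ 2) =
   P * rho ^+ 2 / 16 * (4 * xh ^+ 2 / s0 ^+ 2) - P * rho ^+ 2 / 16 * dl ^+ 2 by ring.
rewrite E3 in err.
set A1 := P * rho ^+ 2 / 16 * (4 * xh ^+ 2 / s0 ^+ 2) in err key2.
set A2 := P * rho ^+ 2 / 16 * dl ^+ 2 in err key.
rewrite key2.
have E4 : (P * rho / s0 + 2 * eps) * xh = P * rho * xh / s0 + 2 * eps * xh by field; rewrite ?s0n.
have E5 : 2^-1 * ((P * rho / s0 + 2 * eps) * hh - A1 * 2 * 2^-1 * 2) =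
  P * rho * hh / (2 * s0) + eps * hh - A1.
  by field; rewrite ?s0n.
rewrite (_ : A1 * 2 = A1 * 2 * 2^-1 * 2); last by field.
rewrite E4 E5.
rewrite -/s0; lra.
Qed.

End taylor.
Definition gco (R : realType) N (rho eps : R) (x0 : 'rV[R]_N) :=
  Eb rho x0 * rho / dotp x0 x0 + 2 * eps.
Definition bco (R : realType) N (rho : R) (x0 : 'rV[R]_N) :=
  Eb rho x0 * rho ^+ 2 / (2 * dotp x0 x0 ^+ 2).

Section hamsec.
Variable R : realType.
Variables N m : nat.
Variable A : Type.
Variables (sigma : 'rV[R]_N -> A -> 'M[R]_(N, m)) (b : 'rV[R]_N -> A -> 'rV[R]_N)
  (l : 'rV[R]_N -> A -> R).

Lemma Lop_Xm x0 g be al :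
  Lop sigma b l x0 (g *: x0) (Xm x0 g be) al =
  - g * (\tr (diffm sigma x0 al) + dotp (b x0 al) x0) + be * quadf (diffm sigma x0 al) x0 - l x0 al.
Proof. rewrite /Lop tr_Xm dotpZr; ring. Qed.

Lemma Eb_pow (rho : R) (x0 : 'rV[R]_N) : 0 < dotp x0 x0 ->
  Eb rho x0 * enorm x0 `^ (2 + rho) = dotp x0 x0.
Proof.
move=> s00.
have r00 : 0 < enorm x0 by rewrite /enorm sqrtr_gt0.
rewrite /Eb /powR gt_eqF // -expRD -enorm_sq lnXn //.
rewrite (_ : - (rho / 2) * (ln (enorm x0) *+ 2) + (2 + rho) * ln (enorm x0) = ln (enorm x0) *+ 2).
  by rewrite -lnXn // lnK // posrE exprn_gt0.
by rewrite !mulr2n; field.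
Qed.

Lemma Ham_strict (is_inf : bool) (a0 : A) (c Lam rho eps K : R) (x0 : 'rV[R]_N) :
  0 < rho -> 0 <= eps -> 0 < K -> 0 < dotp x0 x0 ->
  (forall al, fnorm (sigma x0 al) + enorm (b x0 al) <= K) ->
  (forall al, quadf (diffm sigma x0 al) x0 >= enorm x0 ^+ 2 / K) ->
  (forall x al, `|l x al| <= Lam) ->
  (forall al, \tr (diffm sigma x0 al) + dotp (b x0 al) x0
       <= - ((2 * `|c| + Lam) / rho) * enorm x0 `^ (2 + rho)) ->
  c < Ham is_inf sigma b l x0 (gco rho eps x0 *: x0) (Xm x0 (gco rho eps x0) (bco rho x0)).
Proof.
move=> rho0 eps0 K0 s00 Hbd Hell Hl Hdr.
set P := Eb rho x0. set s0 := dotp x0 x0.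
set g := gco rho eps x0. set be := bco rho x0.
have gE : g = P * rho / s0 + 2 * eps by [].
have beE : be = P * rho ^+ 2 / (2 * s0 ^+ 2) by [].
have P0 : 0 < P by apply: Eb_gt0.
have Lam0 : 0 <= Lam by apply: le_trans (Hl x0 a0).
have C0 : 0 <= (2 * `|c| + Lam) / rho by rewrite divr_ge0 ?addr_ge0 ?mulr_ge0 // ltW.
set C := (2 * `|c| + Lam) / rho in C0 Hdr.
set R2 := enorm x0 `^ (2 + rho) in Hdr.
have R20 : 0 <= R2 by apply: powR_ge0.
have PR : P * R2 = s0 by apply: Eb_pow.
have t1 : 0 < P * rho / s0 by rewrite divr_gt0 ?mulr_gt0.
have g0 : 0 <= g by rewrite gE; lra.
have be0 : 0 < be by rewrite beE divr_gt0 ?mulr_gt0 ?exprn_gt0.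
pose kap := be * (s0 / K).
have kap0 : 0 < kap by apply: mulr_gt0 => //; apply: divr_gt0.
have low : forall al, 2 * `|c| + kap <= Lop sigma b l x0 (g *: x0) (Xm x0 g be) al.
  move=> al; rewrite Lop_Xm.
  have h1 : g * (C * R2) <= - g * (\tr (diffm sigma x0 al) + dotp (b x0 al) x0).
    by rewrite mulNr -mulrN ler_wpM2l // lerNr -mulNr.
  have h2 : 2 * `|c| + Lam <= g * (C * R2).
    have -> : 2 * `|c| + Lam = (P * rho / s0) * (C * R2).
      rewrite /C (_ : P * rho / s0 * ((2 * `|c| + Lam) / rho * R2) = (P * R2) / s0 * (2 * `|c| + Lam)).
        by rewrite PR divff ?mul1r // lt0r_neq0.
      by field; rewrite !lt0r_neq0.
    rewrite gE; apply: ler_wpM2r; [exact: mulr_ge0 | lra].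
  have h3 : kap <= be * quadf (diffm sigma x0 al) x0.
    by rewrite /kap ler_pM2l // /s0 -enorm_sq; exact: Hell.
  have h4 : l x0 al <= Lam by apply: le_trans (ler_norm _) (Hl _ _).
  lra.
have ne : [set Lop sigma b l x0 (g *: x0) (Xm x0 g be) al | al in [set: A]] !=set0.
  by exists (Lop sigma b l x0 (g *: x0) (Xm x0 g be) a0); exists a0.
have ck : c < 2 * `|c| + kap.
  have := ler_norm c; have := normr_ge0 c; lra.
rewrite /Ham; case: is_inf.
  apply: lt_le_trans ck _; apply: lb_le_inf => // y [al _ <-]; exact: low.
apply: lt_le_trans ck _; apply: le_trans (low a0) _.
apply: ub_le_sup; last by exists a0.
pose r0 := enorm x0.
exists (g * (K * r0) + be * (s0 * K ^+ 2) + Lam) => y [al _ <-].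
rewrite Lop_Xm.
have fn0 : 0 <= fnorm (sigma x0 al) by apply: sqrtr_ge0.
have bn0 : 0 <= enorm (b x0 al) by apply: enorm_ge0.
have fnK : fnorm (sigma x0 al) <= K by have := Hbd al; lra.
have bnK : enorm (b x0 al) <= K by have := Hbd al; lra.
have tr0 : 0 <= \tr (diffm sigma x0 al) by rewrite tr_diffm sqr_ge0.
have bx : - dotp (b x0 al) x0 <= K * r0.
  apply: le_trans (_ : `|dotp (b x0 al) x0| <= _); first by rewrite -normrN ler_norm.
  apply: le_trans (CSabs _ _) _; apply: ler_wpM2r => //; exact: enorm_ge0.
have q : quadf (diffm sigma x0 al) x0 <= s0 * K ^+ 2.
  apply: le_trans (quadf_diffm_le _ _ _ _) _.
  by rewrite ler_wpM2l ?dotp_ge0 // ler_pXn2r ?nnegrE // ltW.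
have h1 : - g * (\tr (diffm sigma x0 al) + dotp (b x0 al) x0) <= g * (K * r0).
  rewrite mulNr -mulrN ler_wpM2l //; lra.
have h2 : be * quadf (diffm sigma x0 al) x0 <= be * (s0 * K ^+ 2) by rewrite ler_pM2l.
have h4 : - l x0 al <= Lam by apply: le_trans (_ : _ <= `|l x0 al|) (Hl _ _); rewrite -normrN ler_norm.
lra.
Qed.

End hamsec.
Section topo.
Variable R : realType.
Variable N : nat.

Lemma dotp_cont : continuous (fun y : 'rV[R]_N => dotp y y).
Proof.
rewrite /dotp.
have -> : (fun y : 'rV[R]_N => \sum_(i < N) y 0 i * y 0 i) =
    \sum_(i < N) (fun y : 'rV[R]_N => y 0 i * y 0 i) by rewrite fct_sumE.
apply: (big_ind (fun f : 'rV[R]_N -> R => continuous f)).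
- exact: cst_continuous.
- by move=> f g cf cg x; apply: continuousD; [exact: cf | exact: cg].
- move=> i _ x; apply: continuousM; exact: coord_continuous.
Qed.

Lemma enorm_cont : continuous (@enorm R N).
Proof.
move=> x; apply: (continuous_comp (f := fun y : 'rV[R]_N => dotp y y)).
  exact: dotp_cont.
exact: sqrt_continuous.
Qed.

Lemma mxnorm_le_enorm (y : 'rV[R]_N) : `|y| <= enorm y.
Proof.
rewrite [leLHS]/Num.norm /= mx_normrE.
apply: bigmax_le => [|ij _]; first exact: enorm_ge0.
by case: ij => i j /=; rewrite (ord1 i); exact: enorm_coord.
Qed.

Lemma annulus_compact (a b : R) : compact [set y : 'rV[R]_N | a <= enorm y <= b].
Proof.
apply: bounded_closed_compact.
  rewrite /= /bounded_near; near=> M => y /andP[_ yb].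
  apply: le_trans (mxnorm_le_enorm y) _; apply: le_trans yb _.
  near: M; apply: nbhs_pinfty_ge; exact: num_real.
have -> : [set y : 'rV[R]_N | a <= enorm y <= b] = (@enorm R N) @^-1` [set` `[a, b]].
  by apply/seteqP; split => y /=; rewrite in_itv.
apply: preimage_closed; last exact: itv_closed.
move=> y _; exact: enorm_cont.
Unshelve. all: by end_near.
Qed.

End topo.
Section core.
Variable R : realType.
Variable N : nat.

Lemma G_Eb (rho : R) (y : 'rV[R]_N) : 0 < enorm y -> (enorm y `^ rho)^-1 = Eb rho y.
Proof.
move=> y0; rewrite /powR gt_eqF // -expRN /Eb -enorm_sq lnXn //.
by congr expR; rewrite mulr2n; field.
Qed.

Lemma G_Rad (rho Rad : R) : 0 < Rad ->
  (Rad `^ rho)^-1 = expR (- (rho / 2) * ln (Rad ^+ 2)).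
Proof.
move=> R0; rewrite /powR gt_eqF // -expRN lnXn //.
by congr expR; rewrite mulr2n; field.
Qed.

Lemma enorm_sub_le (x0 y : 'rV[R]_N) :
  enorm y <= enorm x0 + enorm (y - x0) /\ enorm x0 <= enorm y + enorm (y - x0).
Proof.
split.
  by have := enormD x0 (y - x0); rewrite addrC subrK.
by have := enormD y (x0 - y); rewrite addrC subrK -[x0 - y]opprB enormN.
Qed.

Lemma upper_bound (F : 'rV[R]_N -> 'rV[R]_N -> 'M[R]_N -> R) (c rho Rad : R)
  (chi : 'rV[R]_N -> R) :
  0 < rho -> 0 < Rad -> continuous chi ->
  (forall x p X, superjet2 chi x p X -> F x p X <= c) ->
  (forall e : R, 0 < e -> exists r : R, forall x, enorm x >= r -> `|chi x| <= e * enorm x ^+ 2) ->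
  (forall x0 eps, Rad < enorm x0 -> 0 < eps ->
     c < F x0 (gco rho eps x0 *: x0) (Xm x0 (gco rho eps x0) (bco rho x0))) ->
  forall x, Rad <= enorm x ->
  chi x <= sup [set chi y | y in [set y | enorm y <= Rad]]
       - (enorm x `^ rho)^-1 + (Rad `^ rho)^-1.
Proof.
move=> rho0 Rad0 chic HF Hgrow Hstrict x xR.
set S := sup _.
have [cm _ Hcm] : exists2 cm, cm \in [set y : 'rV[R]_N | 0 <= enorm y <= Rad] &
    forall t, t \in [set y : 'rV[R]_N | 0 <= enorm y <= Rad] -> chi t <= chi cm.
  apply: EVT_max_rV.
  - exists 0; rewrite /= /enorm /dotp big1 ?sqrtr0 ?lexx ?ltW // => i _; by rewrite mxE mul0r.
  - exact: annulus_compact.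
  - exact: continuous_subspaceT.
have ballS : forall y, enorm y <= Rad -> chi y <= S.
  move=> y yR; apply: ub_le_sup; last by exists y.
  exists (chi cm) => _ [z zR <-]; apply: Hcm; rewrite inE /= enorm_ge0; exact: zR.
rewrite leNgt; apply/negP => Hlt.
pose GR := expR (- (rho / 2) * ln (Rad ^+ 2)).
pose Gc := fun y : 'rV[R]_N => expR (- (rho / 2) * ln (Order.max (dotp y y) (Rad ^+ 2))).
have Rad2 : 0 < Rad ^+ 2 by apply: exprn_gt0.
have GcR : forall y, Gc y <= GR.
  move=> y; rewrite /Gc /GR ler_expR !mulNr lerN2 ler_pM2l ?divr_gt0 //.
  by rewrite ler_ln ?posrE ?le_max ?lexx ?orbT // lt_max Rad2 orbT.
have GcE : forall y, Rad <= enorm y -> Gc y = Eb rho y.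
  move=> y yR; rewrite /Gc /Eb max_l //.
  have RadW : 0 <= Rad by apply: ltW.
  by rewrite -enorm_sq ler_pXn2r // nnegrE ?enorm_ge0.
have x0 : 0 < enorm x by apply: lt_le_trans xR.
have dxx : 0 < dotp x x by rewrite -enorm_sq exprn_gt0.
pose D := chi x - S + Eb rho x - GR.
have D0 : 0 < D.
  by move: Hlt; rewrite /D G_Eb // G_Rad // -/GR; lra.
pose eps := D / (2 * dotp x x).
have eps0 : 0 < eps by rewrite divr_gt0 ?mulr_gt0.
have [r1 Hr1] := Hgrow (eps / 2) (divr_gt0 eps0 (ltr0Sn _ 1)).
pose Phi := fun y => chi y - S + Gc y - GR - eps * dotp y y.
have PhiX : Phi x = D / 2.
  rewrite /Phi GcE // /eps -/D; field; rewrite lt0r_neq0 //.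
pose rp := Order.max (Order.max r1 (Rad + 1)) (2 * `|S| / eps + 1).
pose rpp := Order.max rp (enorm x).
pose Ks := [set y : 'rV[R]_N | Rad <= enorm y <= rpp].
have Phic : continuous Phi.
  move=> y; rewrite /Phi.
  apply: (@continuousB _ _ _ (fun y => chi y - S + Gc y - GR) (fun y => eps * dotp y y)); last first.
    apply: (@continuousM _ _ (fun=> eps) (fun y => dotp y y)); [exact: cst_continuous | exact: dotp_cont].
  apply: (@continuousB _ _ _ (fun y => chi y - S + Gc y) (fun=> GR)); last exact: cst_continuous.
  apply: (@continuousD _ _ _ (fun y => chi y - S) Gc); last first.
    rewrite /Gc; apply: (continuous_comp (f := fun y : 'rV[R]_N =>
         - (rho / 2) * ln (Order.max (dotp y y) (Rad ^+ 2)))); last exact: continuous_expR.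
    apply: (@continuousM _ _ (fun=> - (rho / 2)) (fun y => ln (Order.max (dotp y y) (Rad ^+ 2)))); first exact: cst_continuous.
    apply: (continuous_comp (f := fun y : 'rV[R]_N => Order.max (dotp y y) (Rad ^+ 2))).
      apply: (continuous_max (f := fun y : 'rV[R]_N => dotp y y) (g := fun=> Rad ^+ 2)).
        exact: dotp_cont.
      exact: cst_continuous.
    by apply: continuous_ln; rewrite lt_max Rad2 orbT.
  apply: (@continuousB _ _ _ chi (fun=> S)); [exact: chic | exact: cst_continuous].
have [x1 x1K Hx1] : exists2 x1, x1 \in Ks & forall t, t \in Ks -> Phi t <= Phi x1.
  apply: EVT_max_rV.
  - by exists x; rewrite /Ks /= xR /rpp le_max lexx orbT.
  - exact: annulus_compact.
  - exact: continuous_subspaceT.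
have Phi1 : D / 2 <= Phi x1.
  rewrite -PhiX; apply: Hx1; rewrite inE /Ks /= xR /rpp le_max lexx orbT //.
move: x1K; rewrite inE /Ks /= => /andP[x1R x1r].
have S0 : forall y : 'rV[R]_N, 0 <= eps * dotp y y by move=> y; apply: mulr_ge0; [exact: ltW | exact: dotp_ge0].
have x1Rad : Rad < enorm x1.
  rewrite ltNge; apply/negP => x1R'.
  have := ballS _ x1R'; have := GcR x1; have := S0 x1.
  move: Phi1; rewrite /Phi; lra.
have x1rp : enorm x1 < rp.
  rewrite ltNge; apply/negP => x1r'.
  have r1x : r1 <= enorm x1 by apply: le_trans x1r'; rewrite /rp !le_max lexx.
  have := Hr1 _ r1x.
  have one : 1 <= enorm x1.
    apply: le_trans x1r'; apply: le_trans (_ : Rad + 1 <= _); first lra.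
    by rewrite /rp !le_max lexx orbT.
  have big : 2 * `|S| / eps + 1 <= enorm x1 by apply: le_trans x1r'; rewrite /rp le_max lexx orbT.
  have sq : enorm x1 <= enorm x1 ^+ 2 by rewrite expr2 ler_peMl //; lra.
  have bigS : `|S| < eps / 2 * enorm x1 ^+ 2.
    have : 2 * `|S| / eps < enorm x1 ^+ 2 by lra.
    rewrite ltr_pdivrMr // => H.
    have -> : eps / 2 * enorm x1 ^+ 2 = (enorm x1 ^+ 2 * eps) / 2 by field.
    rewrite ltr_pdivlMr //; lra.
  rewrite enorm_sq => Hc.
  have := ler_norm (chi x1); have := GcR x1; have := ler_norm (- S); rewrite normrN.
  move: Phi1 bigS; rewrite /Phi enorm_sq; lra.
have x1d : 0 < dotp x1 x1 by rewrite -enorm_sq exprn_gt0 // (lt_trans Rad0).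
have : superjet2 chi x1 (gco rho eps x1 *: x1) (Xm x1 (gco rho eps x1) (bco rho x1)).
  split; first exact: Xm_sym.
  move=> e e0.
  have := taylor rho0 (ltW eps0) e0 x1d; rewrite /= => -[d [d0 Hd]].
  exists (Order.min d (Order.min (enorm x1 - Rad) (rp - enorm x1))).
  split; first by rewrite !lt_min d0 !subr_gt0 x1Rad x1rp.
  move=> y; rewrite !lt_min => /and3P[yd y1 y2].
  have [ub lb] := enorm_sub_le x1 y.
  have yR : Rad < enorm y by lra.
  have yr : enorm y < rp by lra.
  have yK : y \in Ks.
    rewrite inE /Ks /= (ltW yR) /=; apply: ltW; apply: lt_le_trans yr _.
    by rewrite /rpp le_max lexx.
  have := Hx1 _ yK.
  rewrite /Phi GcE ?(ltW yR) // GcE ?(ltW x1Rad) // => Hm.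
  have ydd : 0 < dotp y y by rewrite -enorm_sq exprn_gt0 // (lt_trans Rad0).
  have := Hd y yd ydd.
  rewrite /gco /bco.
  lra.
move=> /HF; have := Hstrict x1 eps x1Rad eps0; lra.
Qed.

End core.
Section negation.
Variable R : realType.
Variables N m : nat.
Variable A : Type.
Variables (sigma : 'rV[R]_N -> A -> 'M[R]_(N, m)) (b : 'rV[R]_N -> A -> 'rV[R]_N)
  (l : 'rV[R]_N -> A -> R).

Lemma quadfN (X : 'M[R]_N) h : quadf (- X) h = - quadf X h.
Proof. by rewrite /quadf mulmxN mulNmx mxE. Qed.

Lemma super_neg (chi : 'rV[R]_N -> R) x p X :
  superjet2 (fun y => - chi y) x p X -> subjet2 chi x (- p) (- X).
Proof.
move=> [XT H]; split; first by rewrite linearN /= XT.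
move=> e e0; have [d [d0 Hd]] := H e e0; exists d; split => // y yd.
have := Hd y yd; rewrite dotpNl quadfN; lra.
Qed.

Lemma LopN x p X al :
  Lop sigma b (fun x al => - l x al) x p X al = - Lop sigma b l x (- p) (- X) al.
Proof. by rewrite /Lop mulmxN linearN /= dotpNr; ring. Qed.

Lemma HamN (is_inf : bool) x p X :
  Ham (~~ is_inf) sigma b (fun x al => - l x al) x p X = - Ham is_inf sigma b l x (- p) (- X).
Proof.
have E : [set Lop sigma b (fun x al => - l x al) x p X al | al in [set: A]] =
    -%R @` [set Lop sigma b l x (- p) (- X) al | al in [set: A]].
  rewrite image_comp; apply: eq_imagel => al _ /=; exact: LopN.
rewrite /Ham; case: is_inf => /=; rewrite E.
  by rewrite /inf opprK.
rewrite /inf; congr (- sup _); apply/seteqP; split.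
  by move=> z [y [w [al _ <-] <-] <-] /=; exists al => //; rewrite opprK.
move=> z [al _ <-]; exists (- Lop sigma b l x (- p) (- X) al); last by rewrite opprK.
by exists (Lop sigma b l x (- p) (- X) al) => //; exists al.
Qed.

End negation.

Lemma ball_bounded (R : realType) N (chi : 'rV[R]_N -> R) (Rad : R) :
  0 < Rad -> continuous chi ->
  exists M, forall y, enorm y <= Rad -> `|chi y| <= M.
Proof.
move=> Rad0 chic.
have ne : [set y : 'rV[R]_N | 0 <= enorm y <= Rad] !=set0.
  exists 0; rewrite /= /enorm /dotp big1 ?sqrtr0 ?lexx ?ltW // => i _; by rewrite mxE mul0r.
have [c1 _ H1] := EVT_max_rV ne (@annulus_compact R N 0 Rad) (continuous_subspaceT chic).
have [c2 _ H2] := EVT_min_rV ne (@annulus_compact R N 0 Rad) (continuous_subspaceT chic).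
exists (`|chi c1| + `|chi c2|) => y yR.
have yin : y \in [set y : 'rV[R]_N | 0 <= enorm y <= Rad] by rewrite inE /= enorm_ge0.
have := H1 _ yin; have := H2 _ yin.
have := ler_norm (chi c1); have := ler_norm (- chi c2); rewrite normrN.
have := ler_norm (chi y); have := ler_norm (- chi y); rewrite normrN.
have := normr_ge0 (chi c1); have := normr_ge0 (chi c2).
move=> a1 a2 a3 a4 a5 a6 a7 a8.
rewrite ler_norml; apply/andP; split; lra.
Qed.

Unset Implicit Arguments.
Theorem theorem6p5 (R : realType) (N m : nat) (A : metricType R) (a0 : A)
  (sigma : 'rV[R]_N -> A -> 'M[R]_(N, m)) (b : 'rV[R]_N -> A -> 'rV[R]_N)
  (l : 'rV[R]_N -> A -> R) (is_inf : bool) (c : R) (chi : 'rV[R]_N -> R)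
  (rho Rad : R) :
  (forall i j, continuous (fun z : 'rV[R]_N * A => sigma z.1 z.2 i j)) ->
  (forall i, continuous (fun z : 'rV[R]_N * A => b z.1 z.2 0 i)) ->
  (forall r : R, 0 < r -> exists K : R, 0 < K /\
     (forall x al, enorm x <= r -> fnorm (sigma x al) + enorm (b x al) <= K) /\
     (forall x y al, enorm x <= r -> enorm y <= r ->
        fnorm (sigma x al - sigma y al) + enorm (b x al - b y al) <= K * enorm (x - y)) /\
     (forall (xi : 'rV[R]_N) x al, enorm x <= r ->
        quadf (diffm sigma x al) xi >= enorm xi ^+ 2 / K)) ->
  continuous (fun z : 'rV[R]_N * A => l z.1 z.2) ->
  (exists M : R, forall x al, `|l x al| <= M) ->
  (forall e : R, 0 < e -> exists d : R, 0 < d /\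
     forall x y al, enorm (x - y) < d -> `|l x al - l y al| < e) ->
  (forall M : R, 0 < M -> exists r : R, 0 < r /\
     forall x al, enorm x >= r -> \tr (diffm sigma x al) + dotp (b x al) x <= - M) ->
  visc_solution (Ham is_inf sigma b l) c chi ->
  (forall e : R, 0 < e -> exists r : R, forall x, enorm x >= r ->
     `|chi x| <= e * enorm x ^+ 2) ->
  0 < rho -> 0 < Rad ->
  (forall x al, enorm x >= Rad ->
     \tr (diffm sigma x al) + dotp (b x al) x
       <= - ((2 * `|c| + linf l) / rho) * enorm x `^ (2 + rho)) ->
  (forall x, enorm x >= Rad ->
     inf [set chi y | y in [set y | enorm y <= Rad]]
       + (enorm x `^ rho)^-1 - (Rad `^ rho)^-1 <= chi x /\
     chi x <= sup [set chi y | y in [set y | enorm y <= Rad]]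
       - (enorm x `^ rho)^-1 + (Rad `^ rho)^-1)
  /\ (exists M : R, forall x, `|chi x| <= M).
Proof.
move=> _ _ Hloc _ [Ml HMl] _ _ [chic [Hsup Hsub]] Hgrow rho0 Rad0 Hdr.
have Hl : forall x al, `|l x al| <= linf l.
  move=> x al; apply: ub_le_sup; last by exists (x, al).
  by exists Ml => _ [z _ <-]; exact: HMl.
have strict : forall (ii : bool) (l' : 'rV[R]_N -> A -> R) (c' : R),
    (forall x al, `|l' x al| <= linf l) -> `|c'| = `|c| ->
    forall x0 eps, Rad < enorm x0 -> 0 < eps ->
    c' < Ham ii sigma b l' x0 (gco rho eps x0 *: x0) (Xm x0 (gco rho eps x0) (bco rho x0)).
  move=> ii l' c' Hl' Hc x0 eps x0R eps0.
  have r0 : 0 < enorm x0 by apply: lt_trans x0R.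
  have [K [K0 [Hbd [_ Hell]]]] := Hloc (enorm x0) r0.
  have dx : 0 < dotp x0 x0 by rewrite -enorm_sq exprn_gt0.
  apply: (@Ham_strict R N m A sigma b l' ii a0 c' (linf l) rho eps K x0 rho0 (ltW eps0) K0 dx).
  - by move=> al; apply: Hbd.
  - by move=> al; apply: Hell.
  - exact: Hl'.
  - by move=> al; rewrite Hc; apply: Hdr; apply: ltW.
have up := @upper_bound R N (Ham is_inf sigma b l) c rho Rad chi rho0 Rad0 chic Hsup Hgrow
  (strict is_inf l c Hl erefl).
have chic' : continuous (fun y => - chi y) by move=> y; apply: continuousN; exact: chic.
have Hsup' : forall x p X, superjet2 (fun y => - chi y) x p X ->
    Ham (~~ is_inf) sigma b (fun x al => - l x al) x p X <= - c.
  by move=> x p X /super_neg/Hsub H; rewrite HamN lerN2.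
have Hgrow' : forall e : R, 0 < e -> exists r : R, forall x, enorm x >= r ->
    `|- chi x| <= e * enorm x ^+ 2.
  by move=> e e0; have [r Hr] := Hgrow e e0; exists r => x xr; rewrite normrN; exact: Hr.
have Hl' : forall x al, `|- l x al| <= linf l by move=> x al; rewrite normrN.
have lo := @upper_bound R N (Ham (~~ is_inf) sigma b (fun x al => - l x al)) (- c) rho Rad
  (fun y => - chi y) rho0 Rad0 chic' Hsup' Hgrow'
  (strict (~~ is_inf) (fun x al => - l x al) (- c) Hl' (normrN c)).
set B := [set y : 'rV[R]_N | enorm y <= Rad].
have E : sup [set - chi y | y in B] = - inf [set chi y | y in B].
  by rewrite /inf image_comp opprK.
set S := sup [set chi y | y in B] in up E *.
set I := inf [set chi y | y in B] in E *.
have main : forall x, enorm x >= Rad ->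
   I + (enorm x `^ rho)^-1 - (Rad `^ rho)^-1 <= chi x /\
   chi x <= S - (enorm x `^ rho)^-1 + (Rad `^ rho)^-1.
  move=> x xR; split; last exact: up.
  by have := lo x xR; rewrite E; lra.
split; first exact: main.
have [Mb HMb] := ball_bounded Rad0 chic.
have Mb0 : 0 <= Mb.
  apply: le_trans (HMb 0 _); first exact: normr_ge0.
  by rewrite /enorm /dotp big1 ?sqrtr0 ?ltW // => i _; rewrite mxE mul0r.
set GR := (Rad `^ rho)^-1.
have GR0 : 0 <= GR by rewrite invr_ge0 powR_ge0.
exists (Mb + `|S| + `|I| + GR) => x.
have := normr_ge0 S; have := normr_ge0 I.
have [xR|xR] := leP (enorm x) Rad.
  by have := HMb x xR; lra.
have [h1 h2] := main x (ltW xR); rewrite -/GR in h1 h2.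
have G0 : 0 <= (enorm x `^ rho)^-1 by rewrite invr_ge0 powR_ge0.
have := ler_norm S; have := ler_norm (- I); rewrite normrN.
move=> a1 a2 a3 a4.
rewrite ler_norml; apply/andP; split; lra.
Qed.
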